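(* Let $r$ and $m$ be positive integers. For any integers $b_1,\dots,b_m$, there are at least $r/m$ elements $x\in\{0,1,\dots,r-1\}$ satisfying $$\left|\sum_{i=1}^{m}\omega_r^{x b_i}\right|\geq \frac12 .$$
   Context: $\omega_r=e^{2\pi i/r}$. *)

(* Defs.v *)
From HB Require Import structures.
From mathcomp Require Import all_boot all_order all_algebra.
From mathcomp Require Import complex.
From mathcomp Require Import all_classical all_reals all_analysis.
Set Implicit Arguments. Unset Strict Implicit. Unset Printing Implicit Defensive.
Import Order.TTheory GRing.Theory Num.Theory.
Local Open Scope ring_scope.
Local Open Scope complex_scope.

Definition expi (R : realType) (t : R) : R[i] := (cos t +i* sin t)%C.

(* omega_r = e^{2 pi i / r};  root_pow r k = omega_r ^ k  for an integer k *)
Definition root_pow (R : realType) (r : nat) (k : int) : R[i] :=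
  expi (2 * pi * k%:~R / r%:R).

(* Main.v *)
Require Import Defs.
From HB Require Import structures.
From mathcomp Require Import all_boot all_order all_algebra.
From mathcomp Require Import complex.
From mathcomp Require Import all_classical all_reals all_analysis.
From mathcomp Require Import ring lra zify.
Import Order.TTheory GRing.Theory Num.Theory.
Local Open Scope ring_scope.

Section Expi.
Variable R : realType.
Local Open Scope complex_scope.

Lemma expiD (a c : R) : expi (a + c) = expi a * expi c.
Proof.
rewrite /expi; apply/eqP; rewrite eq_complex /= cosD sinD.
by apply/andP; split; apply/eqP; ring.
Qed.

Lemma expi0 : expi (0 : R) = 1.
Proof. by rewrite /expi cos0 sin0. Qed.

Lemma expi_conj (a : R) : (expi a)^* = expi (- a).
Proof. by rewrite /expi cosN sinN. Qed.

Lemma Re_expi (a : R) : complex.Re (expi a) = cos a.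
Proof. by []. Qed.

Lemma norm_expi (a : R) : `|expi a| = 1.
Proof.
have h : `|expi a| ^+ 2 = 1 by rewrite sqr_normc expi_conj -expiD subrr expi0.
by apply/eqP; rewrite -sqrp_eq1 // h.
Qed.

Lemma expi_2pi_int (n : int) : expi (2 * pi * n%:~R) = 1 :> R[i].
Proof.
have hn (k : nat) : expi (2 * pi * k%:R) = 1 :> R[i].
  have -> : 2 * pi * k%:R = 0 + (pi *+ 2) *+ k :> R.
    by rewrite add0r -mulrnA -[in RHS]mulr_natr natrM; ring.
  by rewrite /expi (periodicn (@cosD2pi R)) (periodicn (@sinD2pi R)) cos0 sin0.
case: n => k; first exact: (hn k).
rewrite NegzE intrN mulrN -expi_conj.
by rewrite (hn k.+1) conjc1.
Qed.

Lemma cos_lt1 (t : R) : 0 < t < pi *+ 2 -> cos t < 1.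
Proof.
move=> /andP[t0 t2].
have hpi := pi_gt0 R.
case: (lerP t pi) => tpi.
{ rewrite -cos0 ltr_cos ?in_itv /=; rewrite ?mulr2n in t2 *.
  all: try (apply/andP; split); lra. }
have -> : cos t = cos (pi *+ 2 - t).
  by rewrite -cosN -(@cosD2pi R (- t)) [- t + _]addrC.
rewrite -cos0 ltr_cos ?in_itv /=; rewrite ?mulr2n in t2 *.
all: try (apply/andP; split); lra.
Qed.

End Expi.

Section Roots.
Variables (R : realType) (r : nat) (hr : (0 < r)%N).
Local Notation e := (root_pow R r).
Local Open Scope complex_scope.

Lemma eD (a c : int) : e (a + c) = e a * e c.
Proof. by rewrite /root_pow intrD mulrDr mulrDl expiD. Qed.

Lemma e0 : e 0 = 1.
Proof. by rewrite /root_pow mulr0 mul0r expi0. Qed.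

Lemma e_conj (a : int) : (e a)^* = e (- a).
Proof. by rewrite /root_pow expi_conj intrN mulrN mulNr. Qed.

Lemma norm_e (a : int) : `|e a| = 1.
Proof. exact: norm_expi. Qed.

Lemma Re_e (a : int) : complex.Re (e a) = cos (2 * pi * a%:~R / r%:R).
Proof. by []. Qed.

Lemma e_mulr (n : int) : e (r%:Z * n) = 1.
Proof.
rewrite /root_pow intrM.
have rn0 : (r%:R : R) != 0 by rewrite pnatr_eq0 -lt0n.
have -> : 2 * pi * ((r%:Z)%:~R * n%:~R) / r%:R = 2 * pi * n%:~R :> R.
  by rewrite [(r%:Z)%:~R]/=; field.
exact: expi_2pi_int.
Qed.

Lemma e_mod (k : int) : e k = e (k %% r)%Z.
Proof. by rewrite {1}(divz_eq k r) eD [((_ %/ _)%Z * _)%R]mulrC e_mulr mul1r. Qed.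

Lemma e_neq1 (k : int) : ~~ (r%:Z %| k)%Z -> e k != 1.
Proof.
move=> hk; rewrite e_mod.
have r0 : (r%:Z != 0) by rewrite eqz_nat -lt0n.
have k0 : (0 <= k %% r)%Z by rewrite modz_ge0.
have k1 : (k %% r < r)%Z by have := ltz_mod k r0.
have k2 : (k %% r)%Z != 0 by apply/eqP => /dvdz_mod0P; apply/negP.
move: k0 k1 k2; case: (k %% r)%Z => // n _ nr n0.
apply/eqP => /(congr1 (@complex.Re R)); rewrite Re_e /= => hc.
have : cos (2 * pi * n%:R / r%:R) < 1 :> R.
  apply: cos_lt1.
  have hpi := pi_gt0 R.
  have rpos : (0 : R) < r%:R by rewrite ltr0n.
  have npos : (0 : R) < n%:R by rewrite ltr0n lt0n.
  have nlt : (n%:R : R) < r%:R by rewrite ltr_nat.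
  apply/andP; split.
    by rewrite divr_gt0 // mulr_gt0 // mulr_gt0.
  rewrite ltr_pdivrMr // mulr2n; nra.
by rewrite hc ltxx.
Qed.

Lemma e_pow (k : int) (x : nat) : e (x%:Z * k) = e k ^+ x.
Proof.
elim: x => [|x IH]; first by rewrite mul0r e0 expr0.
by rewrite -addn1 PoszD mulrDl mul1r eD IH exprD expr1.
Qed.

Lemma sum_e (k : int) :
  \sum_(x < r) e (x%:Z * k) = if (r%:Z %| k)%Z then r%:R else 0.
Proof.
case: ifP => h.
  rewrite (eq_bigr (fun _ => 1)); last first.
    move=> x _; rewrite e_mod; move/dvdz_mod0P: (dvdz_mull x%:Z h) => ->.
    exact: e0.
  by rewrite sumr_const card_ord.
under eq_bigr do rewrite e_pow.
have := subrX1 (e k) r; rewrite -e_pow e_mulr subrr => /esym/eqP.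
rewrite mulf_eq0 subr_eq0 (negbTE (e_neq1 _ (negbT h))) /=.
by move/eqP.
Qed.

End Roots.

Lemma e_conjN (R : realType) (r : nat) (a : int) :
  Num.conj (root_pow R r a) = root_pow R r (- a).
Proof. exact: e_conj. Qed.

Lemma e_Re1 (R : realType) (r : nat) (a : int) :
  complex.Re (root_pow R r a) = 1 -> root_pow R r a = 1.
Proof.
rewrite /root_pow /expi /= => hc.
have hs := cos2Dsin2 (2 * pi * a%:~R / r%:R : R).
rewrite hc expr1n in hs.
have hs0 : sin (2 * pi * a%:~R / r%:R : R) ^+ 2 == 0 by apply/eqP; apply: (addrI 1); rewrite hs addr0.
move: hs0; rewrite sqrf_eq0 => /eqP hs0.
by rewrite hc hs0.
Qed.

Lemma Re_e_le1 (R : realType) (r : nat) (a : int) :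
  complex.Re (root_pow R r a) <= 1.
Proof. exact: cos_le1. Qed.

Section Cplx.
Variable R : realType.
Local Open Scope complex_scope.

Lemma Re_sum (I : Type) (s : seq I) (P : pred I) (F : I -> R[i]) :
  complex.Re (\sum_(i <- s | P i) F i) = \sum_(i <- s | P i) complex.Re (F i).
Proof. by apply: (big_morph (@complex.Re R)) => // -[a1 b1] [a2 b2]. Qed.

Lemma conj_sum (I : Type) (s : seq I) (P : pred I) (F : I -> R[i]) :
  Num.conj (\sum_(i <- s | P i) F i) = \sum_(i <- s | P i) Num.conj (F i).
Proof. by apply: (big_morph Num.conj) => [x y|]; rewrite ?rmorphD ?rmorph0. Qed.

Lemma ReCE (z : R[i]) : (complex.Re (z * z^*))%:C = z * z^*.
Proof. by case: z => a c; apply/eqP; rewrite eq_complex /= eqxx /=; apply/eqP; ring. Qed.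

Lemma ReC_ge0 (z : R[i]) : 0 <= complex.Re (z * z^*).
Proof. by case: z => a c /=; nra. Qed.

Lemma Re_mulRC (a : R) (z : R[i]) : complex.Re (a%:C * z) = a * complex.Re z.
Proof. by case: z => c d /=; ring. Qed.

Lemma RC_sum (I : Type) (s : seq I) (P : pred I) (F : I -> R) :
  (\sum_(i <- s | P i) F i)%:C = \sum_(i <- s | P i) (F i)%:C.
Proof.
apply: (big_morph (fun a : R => a%:C)) => // a c.
by apply/eqP; rewrite eq_complex /= addr0 !eqxx.
Qed.

Lemma RC_mul (a c : R) : (a * c)%:C = a%:C * c%:C.
Proof. by apply/eqP; rewrite eq_complex /= !mul0r !mulr0 subr0 addr0 !eqxx. Qed.

Lemma RC_nat (n : nat) : ((n%:R : R)%:C) = n%:R.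
Proof. exact: rmorph_nat. Qed.

End Cplx.

Section Sums.
Variables (R : realType) (r : nat) (hr : (0 < r)%N) (m : nat) (b : 'I_m -> int).
Local Notation e := (root_pow R r).
Local Open Scope complex_scope.

Definition S (x : nat) : R[i] := \sum_(i < m) e (x%:Z * b i).
Definition cnt (s : int) : nat :=
  #|[set p : 'I_m * 'I_m | (r%:Z %| b p.1 - b p.2 + s)%Z]|.
Definition alpha (x : nat) : R := complex.Re (S x * (S x)^*).

Lemma SS_expand (x : nat) :
  S x * (S x)^* = \sum_(i < m) \sum_(j < m) e (x%:Z * (b i - b j)).
Proof.
rewrite /S conj_sum mulr_suml; apply: eq_bigr => i _.
rewrite mulr_sumr; apply: eq_bigr => j _.
by rewrite e_conjN -eD mulrBr.
Qed.

Lemma key (s : int) :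
  \sum_(x < r) S x * (S x)^* * e (x%:Z * s) = (r * cnt s)%:R.
Proof.
under eq_bigr do rewrite SS_expand mulr_suml.
under eq_bigr do under eq_bigr do rewrite mulr_suml.
under eq_bigr do under eq_bigr do under eq_bigr do rewrite -eD -mulrDr.
rewrite exchange_big; under eq_bigr do rewrite exchange_big.
under eq_bigr do under eq_bigr do rewrite sum_e //.
rewrite pair_bigA /= -big_mkcond /= sumr_const /cnt cardsE.
by rewrite natrM mulr_natr.
Qed.

Lemma alphaC (x : nat) : (alpha x)%:C = S x * (S x)^*.
Proof. exact: ReCE. Qed.

Lemma alpha_ge0 (x : nat) : 0 <= alpha x.
Proof. exact: ReC_ge0. Qed.

Lemma key0 : \sum_(x < r) S x * (S x)^* = (r * cnt 0)%:R.
Proof. by rewrite -key; apply: eq_bigr => x _; rewrite mulr0 e0 mulr1. Qed.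

Lemma sum_alpha : \sum_(x < r) alpha x = (r * cnt 0)%:R.
Proof.
apply: (@complexI R); rewrite RC_sum RC_nat -key0.
by apply: eq_bigr => x _; rewrite alphaC.
Qed.

Lemma sum_alpha2 :
  \sum_(x < r) alpha x ^+ 2 = (r * \sum_(i < m) \sum_(j < m) cnt (b i - b j))%:R.
Proof.
apply: (@complexI R); rewrite RC_sum RC_nat.
have h (x : nat) : (alpha x ^+ 2)%:C =
    \sum_(i < m) \sum_(j < m) S x * (S x)^* * e (x%:Z * (b i - b j)).
  rewrite expr2 RC_mul alphaC {2}SS_expand mulr_sumr.
  by apply: eq_bigr => i _; rewrite mulr_sumr.
under eq_bigr do rewrite h.
rewrite exchange_big; under eq_bigr do rewrite exchange_big.
under eq_bigr do under eq_bigr do rewrite key.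
rewrite [in X in _ = X]natrM [in X in _ = X]natr_sum [in X in _ = X]mulr_sumr.
apply: eq_bigr => i _; rewrite natr_sum mulr_sumr.
by apply: eq_bigr => j _; rewrite natrM.
Qed.

Lemma cnt_le (s : int) : (cnt s <= cnt 0)%N.
Proof.
have h : ((r * cnt s)%:R : R[i]) <= (r * cnt 0)%:R.
  rewrite -[X in X <= _]ger0_norm ?ler0n // -key -key0.
  apply: (le_trans (ler_norm_sum _ _ _)).
  apply: ler_sum => x _.
  by rewrite normrM norm_e mulr1 -alphaC ger0_norm // ler0c alpha_ge0.
by move: h; rewrite ler_nat leq_pmul2l.
Qed.

Lemma cnt_eq (s : int) : cnt s = cnt 0 ->
  forall x : 'I_r, alpha x != 0 -> e (x%:Z * s) = 1.
Proof.
move=> hs x ax.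
have h : \sum_(x < r) S x * (S x)^* * e (x%:Z * s) = \sum_(x < r) S x * (S x)^*.
  by rewrite key key0 hs.
have h2 : \sum_(x < r) (alpha x - alpha x * complex.Re (e (x%:Z * s))) = 0.
  rewrite sumrB; apply/eqP; rewrite subr_eq0; apply/eqP.
  move/(congr1 (@complex.Re R)): h; rewrite !Re_sum => <-.
  by apply: eq_bigr => y _; rewrite -alphaC Re_mulRC.
have hnn : forall y : 'I_r, true -> 0 <= alpha y - alpha y * complex.Re (e (y%:Z * s)).
  move=> y _; rewrite -{1}(mulr1 (alpha y)) -mulrBr mulr_ge0 ?alpha_ge0 //.
  by rewrite subr_ge0 Re_e_le1.
have h3 := psumr_eq0P hnn h2 (i := x) isT.
apply: e_Re1.
move: h3; rewrite -{1}(mulr1 (alpha x)) -mulrBr => /eqP.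
by rewrite mulf_eq0 (negbTE ax) /= subr_eq0 => /eqP <-.
Qed.

End Sums.

Section More.
Variables (R : realType) (r : nat) (hr : (0 < r)%N) (m : nat) (b : 'I_m -> int).
Local Notation e := (root_pow R r).
Local Notation S := (S R r m b).
Local Notation alpha := (alpha R r m b).
Local Notation cnt := (cnt r m b).
Local Open Scope complex_scope.

Lemma alpha_norm (x : nat) : (alpha x)%:C = `|S x| ^+ 2.
Proof. by rewrite sqr_normc alphaC. Qed.

Lemma normS_le (x : nat) : `|S x| <= m%:R.
Proof.
apply: (le_trans (ler_norm_sum _ _ _)).
by rewrite (eq_bigr (fun _ => 1)) ?sumr_const ?card_ord // => i _; rewrite norm_e.
Qed.

Lemma alpha_le (x : nat) : alpha x <= (m%:R : R) ^+ 2.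
Proof.
rewrite -lecR alpha_norm expr2 RC_mul RC_nat -expr2.
by apply: lerXn2r; rewrite ?nnegrE ?normr_ge0 ?ler0n ?normS_le.
Qed.

Lemma thr (x : nat) : (2^-1 <= `|S x|) = (4^-1 <= alpha x).
Proof.
rewrite -ler_sqr ?nnegrE ?invr_ge0 ?ler0n ?normr_ge0 //.
rewrite -lecR alpha_norm; congr (_ <= _).
have h4 : (4 : R[i]) != 0 by rewrite pnatr_eq0.
apply: (mulfI h4).
rewrite -[in RHS](RC_nat R 4) -RC_mul mulfV ?pnatr_eq0 //.
have -> : (4 : R[i]) = 2 ^+ 2 by rewrite expr2 -natrM.
by rewrite -exprMn mulfV ?pnatr_eq0 // expr1n.
Qed.

Lemma alpha_01 (i : 'I_m) :
  (m < 2 * #|[set j | cnt (b i - b j) == cnt 0]|)%N ->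
  forall x : 'I_r, alpha x = 0 \/ 1 <= alpha x.
Proof.
set J := [set j | _ == _] => hJ x.
case: (eqVneq (alpha x) 0) => [->|ax]; [by left | right].
have hj : forall j, j \in J -> e (x%:Z * b j) = e (x%:Z * b i).
  move=> j; rewrite inE => /eqP hj.
  have h := @cnt_eq R r hr m b _ hj x ax.
  by rewrite -[x%:Z * b i](subrK (x%:Z * b j)) -mulrBr eD h mul1r.
have hS : S x = e (x%:Z * b i) *+ #|J| + \sum_(j in ~: J) e (x%:Z * b j).
  rewrite /S (bigID (mem J)) /=; congr (_ + _).
    by rewrite -sumr_const; apply: eq_bigr => j /hj.
  by apply: eq_bigl => j; rewrite !inE.
have hc : (#|J| + #|~: J| = m)%N by rewrite cardsC card_ord.
have h1 : (1 : R[i]) <= `|S x|.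
  rewrite hS; apply: le_trans (lerB_normD _ _).
  rewrite normrMn norm_e.
  have hn : `|\sum_(j in ~: J) e (x%:Z * b j)| <= #|~: J|%:R.
    apply: (le_trans (ler_norm_sum _ _ _)).
    by rewrite (eq_bigr (fun _ => 1)) ?sumr_const // => j _; rewrite norm_e.
  apply: le_trans (lerB (lexx (#|J|%:R)) hn).
  rewrite lerBrDr addrC natr1 ler_nat; lia.
rewrite -lecR alpha_norm.
by apply: exprn_ege1.
Qed.

End More.

Section Core.
Variable R : realType.

Lemma cauchy_schwarz (T : finType) (A : {set T}) (f : T -> R) :
  (\sum_(x in A) f x) ^+ 2 <= #|A|%:R * \sum_(x in A) f x ^+ 2.
Proof.
set s1 := \sum_(x in A) f x; set s2 := \sum_(x in A) f x ^+ 2.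
have h : 0 <= \sum_(x in A) \sum_(y in A) (f x - f y) ^+ 2.
  by apply: sumr_ge0 => x _; apply: sumr_ge0 => y _; exact: sqr_ge0.
have e1 : \sum_(x in A) \sum_(y in A) (f x - f y) ^+ 2 =
   \sum_(x in A) \sum_(y in A) f x ^+ 2 + \sum_(x in A) \sum_(y in A) f y ^+ 2
   - (\sum_(x in A) \sum_(y in A) f x * f y) *+ 2.
  rewrite -sumrMnl -big_split -sumrB /=; apply: eq_bigr => x _.
  rewrite -sumrMnl -big_split -sumrB /=; apply: eq_bigr => y _.
  by rewrite mulr2n; ring.
have ea : \sum_(x in A) \sum_(y in A) f x ^+ 2 = #|A|%:R * s2.
  rewrite /s2 mulr_sumr; apply: eq_bigr => x _.
  by rewrite sumr_const mulr_natl.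
have eb : \sum_(x in A) \sum_(y in A) f y ^+ 2 = #|A|%:R * s2.
  by rewrite sumr_const mulr_natl.
have ec : \sum_(x in A) \sum_(y in A) f x * f y = s1 ^+ 2.
  rewrite expr2 /s1 mulr_suml; apply: eq_bigr => x _.
  by rewrite mulr_sumr.
move: h; rewrite e1 ea eb ec mulr2n => h.
lra.
Qed.

Lemma sum_sub_le (T : finType) (A : {set T}) (g : T -> R) :
  (forall x, 0 <= g x) -> \sum_(x in A) g x <= \sum_x g x.
Proof.
move=> hg; rewrite [X in _ <= X](bigID (mem A)) /= lerDl.
by apply: sumr_ge0 => x _; exact: hg.
Qed.

Lemma core (r m : nat) (hm : (0 < m)%N) (hr : (0 < r)%N) (al : 'I_r -> R)
  (E : nat) (D : 'I_m -> 'I_m -> nat)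
  (ha0 : forall x, 0 <= al x)
  (hs1 : \sum_x al x = (r * E)%:R)
  (hs2 : \sum_x al x ^+ 2 = (r * \sum_i \sum_j D i j)%:R)
  (hDE : forall i j, (D i j <= E)%N) (hEm : (m <= E)%N)
  (hN : (#|[set x | (4^-1 <= al x)%R]| * m <= r)%N) :
  exists i, (m < 2 * #|[set j | D i j == E]|)%N.
Proof.
case: (boolP [exists i, (m < 2 * #|[set j | D i j == E]|)%N]) => [/existsP [i hi]|hno].
  by exists i.
exfalso.
have hall : forall i, (2 * #|[set j | D i j == E]| <= m)%N.
  by move=> i; move/existsPn: hno => /(_ i); rewrite -leqNgt.
set E4 := \sum_(i < m) \sum_(j < m) D i j.
set A := [set x | 4^-1 <= al x].
set N := #|A|.
have mpos : (1 : R) <= m%:R by rewrite ler1n.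
have rpos : (1 : R) <= r%:R by rewrite ler1n.
have hEm' : (m%:R : R) <= E%:R by rewrite ler_nat.
have stepA : 2 * (E4%:R : R) <= m%:R * (2 * m%:R * (E%:R - 1) + m%:R).
  have per : forall i : 'I_m,
      2 * (\sum_(j < m) D i j)%:R <= 2 * m%:R * (E%:R - 1) + m%:R :> R.
    move=> i; set J := [set j | D i j == E].
    have h1 : (\sum_(j < m) D i j)%:R <=
        \sum_(j < m) ((E%:R - 1) + (if j \in J then 1 else 0)) :> R.
      rewrite natr_sum; apply: ler_sum => j _.
      rewrite inE; case: eqP => [->|ne].
        by rewrite addrNK.
      have hlt : ((D i j).+1 <= E)%N by rewrite ltn_neqAle hDE andbT; apply/eqP.
      by rewrite addr0 lerBrDr natr1 ler_nat.
    rewrite big_split /= sumr_const card_ord -big_mkcond /= sumr_const in h1.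
    have hJ : ((2 * #|J|)%:R : R) <= m%:R by rewrite ler_nat hall.
    rewrite natrM in hJ.
    rewrite -mulr_natr in h1.
    nra.
  rewrite /E4 natr_sum mulr_sumr.
  have -> : m%:R * (2 * m%:R * (E%:R - 1) + m%:R) =
      \sum_(i < m) (2 * m%:R * (E%:R - 1) + m%:R) :> R.
    by rewrite sumr_const card_ord mulr_natl.
  by apply: ler_sum => i _; exact: per.
have hsplit : \sum_x al x = \sum_(x in A) al x + \sum_(x | x \notin A) al x.
  by rewrite (bigID (mem A)).
have hout : \sum_(x | x \notin A) al x <= r%:R / 4.
  rewrite big_mkcond /=.
  apply: le_trans (_ : \sum_(x < r) 4^-1 <= _).
    apply: ler_sum => x _; case: ifP => hx.
      by move: hx; rewrite inE -ltNge => /ltW.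
    by rewrite invr_ge0 ler0n.
  by rewrite sumr_const card_ord mulr_natl.
set a := \sum_(x in A) al x.
have ha : r%:R * E%:R - r%:R / 4 <= a.
  move: hs1; rewrite hsplit natrM -/a => hs1; lra.
have hE1 : (1 : R) <= E%:R by lra.
have ha0' : 0 <= r%:R * E%:R - r%:R / 4 :> R by nra.
have hcs : a ^+ 2 <= N%:R * (r%:R * E4%:R).
  apply: le_trans (cauchy_schwarz _ A al) _.
  rewrite -/N -natrM -hs2; apply: ler_wpM2l; first by rewrite ler0n.
  apply: sum_sub_le => x; exact: sqr_ge0.
have hNm : (N%:R : R) * m%:R <= r%:R by rewrite -natrM ler_nat.
have hq : 0 <= r%:R * E4%:R :> R by rewrite -natrM ler0n.
have h1 : m%:R * (r%:R * E%:R - r%:R / 4) ^+ 2 <= r%:R * (r%:R * E4%:R) :> R.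
  have h2 : (r%:R * E%:R - r%:R / 4) ^+ 2 <= a ^+ 2 :> R.
    by apply: lerXn2r; rewrite ?nnegrE //; apply: le_trans ha.
  apply: le_trans (_ : m%:R * (N%:R * (r%:R * E4%:R)) <= _).
    apply: ler_wpM2l; first by rewrite ler0n.
    exact: le_trans hcs.
  by rewrite mulrA [m%:R * _]mulrC; apply: ler_wpM2r.
have h3 : m%:R * (E%:R - 4^-1) ^+ 2 <= (E4%:R : R).
  have hr2 : (0 : R) < r%:R ^+ 2 by rewrite exprn_gt0 // ltr0n.
  rewrite -(ler_pM2l hr2); move: h1.
  have -> : (r%:R * E%:R - r%:R / 4) = r%:R * (E%:R - 4^-1) :> R by ring.
  move=> h.
  have e1 : r%:R ^+ 2 * (m%:R * (E%:R - 4^-1) ^+ 2) =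
    m%:R * (r%:R * (E%:R - 4^-1)) ^+ 2 :> R by ring.
  have e2 : r%:R ^+ 2 * E4%:R = r%:R * (r%:R * E4%:R) :> R by ring.
  by rewrite e1 e2.
have h4 : 2 * (E%:R - 4^-1) ^+ 2 <= m%:R * (2 * E%:R - 1) :> R.
  have hmp : (0 : R) < m%:R by rewrite ltr0n.
  rewrite -(ler_pM2l hmp); nra.
have h5 : m%:R * (2 * E%:R - 1) <= E%:R * (2 * E%:R - 1) :> R.
  by apply: ler_wpM2r => //; lra.
nra.
Qed.

End Core.

Lemma cnt0_ge (r m : nat) (b : 'I_m -> int) : (m <= cnt r m b 0)%N.
Proof.
rewrite /cnt.
have inj : injective (fun j : 'I_m => (j, j)) by move=> j k [].
rewrite -{1}(card_ord m) -(card_imset predT inj).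
apply: subset_leq_card; apply/fintype.subsetP => p /imsetP [j _ ->].
by rewrite inE /= subrr add0r dvdz0.
Qed.

Theorem lemma1 (R : realType) (r m : nat) (hr : (0 < r)%N) (hm : (0 < m)%N)
    (b : 'I_m -> int) :
  (r%:R / m%:R : R) <=
  #|[set x : 'I_r | 2^-1 <= `|\sum_(i < m) root_pow R r (x%:Z * b i)|]|%:R.
Proof.
set al := fun x : 'I_r => alpha R r m b x.
have hA : #|[set x : 'I_r | 2^-1 <= `|\sum_(i < m) root_pow R r (x%:Z * b i)|]| =
    #|[set x : 'I_r | (4^-1 <= al x)%R]|.
  by apply: eq_card => x; rewrite !inE; exact: (thr R r m b x).
rewrite hA; set N := #|_|.
rewrite ler_pdivrMr ?ltr0n // -natrM ler_nat.
case: (leqP r (N * m)) => // hlt; exfalso.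
have ha0 : forall x, 0 <= al x by move=> x; exact: alpha_ge0.
have hs1 : \sum_x al x = (r * cnt r m b 0)%:R by exact: sum_alpha.
have hs2 : \sum_x al x ^+ 2 =
    (r * \sum_i \sum_j (fun i j => cnt r m b (b i - b j)) i j)%:R.
  exact: sum_alpha2.
have hDE : forall i j, ((fun i j => cnt r m b (b i - b j)) i j <= cnt r m b 0)%N.
  by move=> i j; exact: cnt_le.
have [i hi] := @core R r m hm hr al _ (fun i j => cnt r m b (b i - b j)) ha0 hs1 hs2 hDE (cnt0_ge r m b) (ltnW hlt).
have h01 := @alpha_01 R r hr m b i hi.
have hle : ((r * cnt r m b 0)%:R : R) <= N%:R * (m%:R) ^+ 2.
  rewrite -hs1 (bigID (mem [set x : 'I_r | (4^-1 <= al x)%R])) /=.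
  have -> : \sum_(x | x \notin [set x : 'I_r | (4^-1 <= al x)%R]) al x = 0.
    apply: big1 => x; rewrite inE -ltNge => hx.
    case: (h01 x) => // h1; exfalso.
    have : (1 : R) < 4^-1 by apply: le_lt_trans hx.
    by rewrite invf_gt1 ?ltr0n //; lra.
  rewrite addr0 mulr_natl /N -sumr_const.
  by apply: ler_sum => x _; exact: alpha_le.
move: hle; rewrite -natrX -natrM ler_nat => hle.
have hEm := cnt0_ge r m b.
have h1 : (r * m <= r * cnt r m b 0)%N by rewrite leq_mul2l hEm orbT.
have h2 : (N * m * m < r * m)%N by rewrite ltn_pmul2r.
move: hle; rewrite mulnA; lia.
Qed.
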